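(* Let $n$ be a positive integer, let $\mathcal F$ be an $\mathcal N$-saturated family of subsets of $[n]$, and let $\mathcal G$ be a component of $\mathcal F$ with minimal elements $B_1,\dots,B_l$ and maximal elements $A_1,\dots,A_k$. Let $M\in\mathcal F$ satisfy $\bigcup_{j=1}^l B_j\subseteq M\subseteq\bigcap_{j=1}^k A_j$ and be minimal (with respect to inclusion) among sets of $\mathcal F$ with this property. Suppose $i\in[n]$, $i\notin M$ and $M\cup\{i\}\notin\mathcal F$. If $M\cup\{i\}$ is a maximal element of some induced copy of $\mathcal N$ in $\mathcal F\cup\{M\cup\{i\}\}$, then there exists an induced copy of $\mathcal N$ in $\mathcal F\cup\{M\cup\{i\}\}$ in which $M\cup\{i\}$ is the maximal element comparable to both minimal elements and $M$ is one of the minimal elements. Moreover, the number of $i\in[n]\setminus M$ such that $M\cup\{i\}\notin\mathcal F$ and $M\cup\{i\}$ is a maximal element of some induced copy of $\mathcal N$ in $\mathcal F\cup\{M\cup\{i\}\}$ is at most $|\mathcal F|-2$.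
   Context: The poset $\mathcal N$ has four elements $a,b,c,d$ with $a<c$, $b<c$, $b<d$ and no other comparabilities (so $a,b$ are its minimal elements, $c,d$ its maximal elements; $c$ is the unique maximal element comparable to both minimal elements). A family $\mathcal Q$ of sets (ordered by inclusion) contains an induced copy of $\mathcal N$ if there are distinct sets in $\mathcal Q$ whose inclusion relations are exactly those of $a,b,c,d$ above. A family $\mathcal F$ of subsets of $[n]=\{1,\dots,n\}$ is $\mathcal N$-saturated if $\mathcal F$ contains no induced copy of $\mathcal N$, but for every $S\subseteq[n]$ with $S\notin\mathcal F$, the family $\mathcal F\cup\{S\}$ contains an induced copy of $\mathcal N$. A component of $\mathcal F$ is the vertex set of a connected component of the Hasse diagram (as a graph) of the poset $(\mathcal F\setminus\{\emptyset,[n]\},\subseteq)$; its minimal and maximal elements are taken with respect to inclusion within the component. *)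

(* Defs.v *)
From mathcomp Require Import all_boot.
Set Implicit Arguments. Unset Strict Implicit. Unset Printing Implicit Defensive.

Section Defs.
Variable n : nat.
Notation S := {set 'I_n}.

(* (a,b,c,d) realise N exactly: a<c, b<c, b<d, and no other comparabilities.
   Distinctness of a,b,c,d follows from these conditions. *)
Definition is_N (a b c d : S) : bool :=
  [&& a \proper c, b \proper c, b \proper d,
      ~~ (a \subset b), ~~ (b \subset a),
      ~~ (c \subset d), ~~ (d \subset c),
      ~~ (a \subset d) & ~~ (d \subset a)].

Definition has_N (Q : {set S}) : Prop :=
  exists a b c d, [/\ a \in Q, b \in Q, c \in Q, d \in Q & is_N a b c d].

Definition N_saturated (F : {set S}) : Prop :=
  ~ has_N F /\ forall X : S, X \notin F -> has_N (X |: F).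

Definition inner (F : {set S}) : {set S} := F :\: [set set0; setT].

Definition covers (F : {set S}) (X Y : S) : bool :=
  [&& X \in inner F, Y \in inner F, X \proper Y &
      [forall Z, ~~ [&& Z \in inner F, X \proper Z & Z \proper Y]]].

Definition hasse (F : {set S}) : rel S :=
  fun X Y => covers F X Y || covers F Y X.

Definition component (F G : {set S}) : Prop :=
  exists2 X, X \in inner F & G = [set Y in inner F | connect (hasse F) X Y].

Definition minimal_in (G : {set S}) (B : S) : bool :=
  (B \in G) && [forall Y in G, ~~ (Y \proper B)].
Definition maximal_in (G : {set S}) (A : S) : bool :=
  (A \in G) && [forall Y in G, ~~ (A \proper Y)].

Definition between (G : {set S}) (M : S) : Prop :=
  (forall B, minimal_in G B -> B \subset M) /\
  (forall A, maximal_in G A -> M \subset A).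

Definition max_in_some_N (Q : {set S}) (X : S) : bool :=
  [exists a : S, exists b : S, exists c : S, exists d : S,
     [&& a \in Q, b \in Q, c \in Q, d \in Q, is_N a b c d
       & (X == c) || (X == d)]].

End Defs.

(* Main.v *)
Require Import Defs.
From mathcomp Require Import all_boot zify.
Set Implicit Arguments. Unset Strict Implicit. Unset Printing Implicit Defensive.

Lemma innerP n (F : {set {set 'I_n}}) Y :
  (Y \in inner F) = [&& Y \in F, Y != set0 & Y != setT].
Proof. by rewrite /inner !inE negb_or andbC andbA. Qed.

Lemma hasse_sym n (F : {set {set 'I_n}}) : symmetric (hasse F).
Proof. by move=> x y; rewrite /hasse orbC. Qed.

Lemma proper_connect n (F : {set {set 'I_n}}) x y :
  x \in inner F -> y \in inner F -> x \proper y -> connect (hasse F) x y.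
Proof.
move: {2}(#|y| - #|x|) (leqnn (#|y| - #|x|)) => k.
elim: k x y => [|k IH] x y Hk xi yi xy.
  by have := proper_card xy; lia.
case Hc: [forall Z, ~~ [&& Z \in inner F, x \proper Z & Z \proper y]].
  by apply: connect1; rewrite /hasse /covers xi yi xy Hc.
move/negbT: Hc => /forallPn [Z /negPn /and3P [Zi xZ Zy]].
have c1 := proper_card xZ; have c2 := proper_card Zy.
apply: connect_trans (IH x Z _ xi Zi xZ) (IH Z y _ Zi yi Zy); lia.
Qed.

Lemma memcomp n (F : {set {set 'I_n}}) X0 Y :
  (Y \in [set Y0 in inner F | connect (hasse F) X0 Y0]) =
  (Y \in inner F) && connect (hasse F) X0 Y.
Proof. by rewrite in_set. Qed.

Lemma compP n (F G : {set {set 'I_n}}) : component F G ->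
  [/\ (forall Y, Y \in G -> Y \in inner F),
      (forall Y Z, Y \in G -> Z \in inner F -> (Y \proper Z) || (Z \proper Y) -> Z \in G)
    & exists Y, Y \in G].
Proof.
case=> X0 X0i ->; split.
- by move=> Y; rewrite memcomp => /andP[].
- move=> Y Z; rewrite !memcomp => /andP[Yi cY] Zi /orP[YZ|ZY]; rewrite Zi /=.
    exact: (@connect_trans _ _ Y _ _ cY (proper_connect Yi Zi YZ)).
  apply: (@connect_trans _ _ Y _ _ cY); rewrite (sym_connect_sym (@hasse_sym _ F)).
  exact: proper_connect.
- by exists X0; rewrite memcomp X0i connect0.
Qed.

Lemma exists_min n (G : {set {set 'I_n}}) Y : Y \in G ->
  exists B, minimal_in G B /\ B \subset Y.
Proof.
move=> YG.
pose P : pred {set 'I_n} := [pred Z | (Z \in G) && (Z \subset Y)].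
have PY : P Y by rewrite /P /= YG subxx.
case: (arg_minnP (fun Z : {set 'I_n} => #|Z|) PY) => B /andP[BG BY] Bmin.
exists B; split=> //; rewrite /minimal_in BG /=; apply/forall_inP => Z ZG.
apply/negP => ZB.
have := Bmin Z; rewrite /P /= ZG (subset_trans (proper_sub ZB) BY) => /(_ isT) /=.
by rewrite leqNgt (proper_card ZB).
Qed.

Lemma exists_max n (G : {set {set 'I_n}}) Y : Y \in G ->
  exists A, maximal_in G A /\ Y \subset A.
Proof.
move=> YG.
pose P : pred {set 'I_n} := [pred Z | (Z \in G) && (Y \subset Z)].
have PY : P Y by rewrite /P /= YG subxx.
case: (arg_maxnP (fun Z : {set 'I_n} => #|Z|) PY) => A /andP[AG YA] Amax.
exists A; split=> //; rewrite /maximal_in AG /=; apply/forall_inP => Z ZG.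
apply/negP => AZ.
have := Amax Z; rewrite /P /= ZG (subset_trans YA (proper_sub AZ)) => /(_ isT) /=.
by rewrite leqNgt (proper_card AZ).
Qed.

Lemma memU1 n (F : {set {set 'I_n}}) x y : x \in y |: F -> x != y -> x \in F.
Proof. by case/setU1P => [->|//]; rewrite eqxx. Qed.

Lemma ne0 n (x y : {set 'I_n}) : ~~ (x \subset y) -> x != set0.
Proof. by apply: contra => /eqP ->; exact: sub0set. Qed.

Lemma neT n (x y : {set 'I_n}) : ~~ (y \subset x) -> x != setT.
Proof. by apply: contra => /eqP ->; exact: subsetT. Qed.

Lemma properNT n (x y : {set 'I_n}) : x \proper y -> x != setT.
Proof. by apply: contraTneq => ->; rewrite properE subsetT andbF. Qed.

Lemma properN0 n (x y : {set 'I_n}) : x \proper y -> y != set0.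
Proof. by apply: contraTneq => ->; rewrite properE sub0set andbF. Qed.

Lemma innerF n (F : {set {set 'I_n}}) Y : Y \in inner F -> Y \in F.
Proof. by rewrite innerP => /and3P[]. Qed.

Lemma inc_btw n (F G : {set {set 'I_n}}) s Y :
  ~ has_N F -> (forall Y, Y \in G -> Y \in inner F) ->
  s \in F -> between G s -> Y \in G -> ~~ (s \subset Y) -> ~~ (Y \subset s) ->
  between G Y.
Proof.
move=> nN Gi sF [sB sA] YG sY Ys.
have FY : Y \in F by exact/innerF/Gi.
split.
- move=> B' B'min; apply/negPn/negP => B'Y.
  have [B [Bmin BY]] := exists_min YG.
  case/andP: (Bmin) => BG /forall_inP Bm; case/andP: (B'min) => B'G /forall_inP B'm.
  have Bs := sB B Bmin; have B's := sB B' B'min.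
  have FB : B \in F by exact/innerF/Gi.
  have FB' : B' \in F by exact/innerF/Gi.
  have BB' : B != B' by apply: contraNneq B'Y => <-.
  have nBB' : ~~ (B \subset B').
    by apply/negP => h; have := B'm B BG; rewrite properEneq BB' h.
  have nB'B : ~~ (B' \subset B).
    by apply/negP => h; have := Bm B' B'G; rewrite properEneq eq_sym BB' h.
  apply: nN; exists B', B, s, Y; split => //.
  rewrite /is_N !properE Bs B's BY sY Ys B'Y nBB' nB'B /=.
  apply/and4P; split.
  + by apply/negP => h; move/negP: nBB'; apply; exact: subset_trans Bs h.
  + by apply/negP => h; move/negP: sY; apply; exact: subset_trans h BY.
  + by apply/negP => h; move/negP: Ys; apply; exact: subset_trans h Bs.
  + by apply/negP => h; move/negP: Ys; apply; exact: subset_trans h B's.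
- move=> A' A'max; apply/negPn/negP => YA'.
  have [A [Amax YA]] := exists_max YG.
  case/andP: (Amax) => AG /forall_inP Am; case/andP: (A'max) => A'G /forall_inP A'm.
  have sA0 := sA A Amax; have sA' := sA A' A'max.
  have FA : A \in F by exact/innerF/Gi.
  have FA' : A' \in F by exact/innerF/Gi.
  have AA' : A != A' by apply: contraNneq YA' => <-.
  have nAA' : ~~ (A \subset A').
    by apply/negP => h; have := Am A' A'G; rewrite properEneq AA' h.
  have nA'A : ~~ (A' \subset A).
    by apply/negP => h; have := A'm A AG; rewrite properEneq eq_sym AA' h.
  apply: nN; exists Y, s, A, A'; split => //.
  rewrite /is_N !properE sA0 sA' YA sY Ys YA' nAA' nA'A /=.
  apply/and4P; split.
  + by apply/negP => h; move/negP: sY; apply; exact: subset_trans sA0 h.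
  + by apply/negP => h; move/negP: Ys; apply; exact: subset_trans YA h.
  + by apply/negP => h; move/negP: nA'A; apply; exact: subset_trans h sA0.
  + by apply/negP => h; move/negP: sY; apply; exact: subset_trans sA' h.
Qed.

Definition btwb n (G : {set {set 'I_n}}) (s : {set 'I_n}) : bool :=
  [forall B, minimal_in G B ==> (B \subset s)] &&
  [forall A, maximal_in G A ==> (s \subset A)].

Lemma btwP n (G : {set {set 'I_n}}) s : reflect (between G s) (btwb G s).
Proof.
apply: (iffP andP) => [[/forallP h1 /forallP h2]|[h1 h2]]; split.
- by move=> B /(implyP (h1 B)).
- by move=> A /(implyP (h2 A)).
- by apply/forallP => B; apply/implyP/h1.
- by apply/forallP => A; apply/implyP/h2.
Qed.

Lemma isN_unpack n (a b c d : {set 'I_n}) : is_N a b c d ->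
  [/\ a \proper c, b \proper c, b \proper d, ~~ (a \subset b) & ~~ (b \subset a)]
  /\ [/\ ~~ (c \subset d), ~~ (d \subset c), ~~ (a \subset d) & ~~ (d \subset a)].
Proof.
by case/and5P => ac bc bd nab /and5P[nba ncd ndc nad nda].
Qed.

Lemma set0_in n (F : {set {set 'I_n}}) : N_saturated F -> set0 \in F.
Proof.
case=> nN sat; apply/negPn/negP => h.
have [a [b [c [d [aF bF cF dF HN]]]]] := sat _ h.
have [[ac bc bd nab nba] [ncd ndc nad nda]] := isN_unpack HN.
apply: nN; exists a, b, c, d; split => //.
- exact: (memU1 aF (ne0 nab)).
- exact: (memU1 bF (ne0 nba)).
- exact: (memU1 cF (properN0 ac)).
- exact: (memU1 dF (properN0 bd)).
Qed.

Lemma M_in_G n (F G : {set {set 'I_n}}) M :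
  (forall Y, Y \in G -> Y \in inner F) ->
  (forall Y Z, Y \in G -> Z \in inner F -> (Y \proper Z) || (Z \proper Y) -> Z \in G) ->
  (exists Y, Y \in G) -> M \in F -> between G M -> M \in G.
Proof.
move=> Gi Gc [Y YG] MF [bB bA].
have [B [Bmin _]] := exists_min YG.
have BM := bB B Bmin; case/andP: (Bmin) => BG _.
have [A [Amax BA]] := exists_max BG.
have MA := bA A Amax; case/andP: (Amax) => AG _.
have := Gi B BG; rewrite innerP => /and3P[_ B0 _].
have := Gi A AG; rewrite innerP => /and3P[_ _ AT].
have Mi : M \in inner F.
  rewrite innerP MF /=; apply/andP; split.
  - by apply: contraNneq B0 => M0; rewrite -subset0 -M0.
  - by apply: contraNneq AT => MT; rewrite -subTset -MT.
case: (eqVneq B M) => [<-//|BneM].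
by apply: (Gc B M BG Mi); rewrite properEneq BneM BM.
Qed.

Lemma Lcomp n (F G : {set {set 'I_n}}) M :
  N_saturated F ->
  (forall Y, Y \in G -> Y \in inner F) ->
  (forall Y Z, Y \in G -> Z \in inner F -> (Y \proper Z) || (Z \proper Y) -> Z \in G) ->
  (exists Y, Y \in G) -> M \in F -> between G M ->
  (forall M', M' \in F -> between G M' -> M' \subset M -> M' = M) ->
  forall Y, Y \in G -> (Y \subset M) || (M \subset Y).
Proof.
move=> [nN sat] Gi Gc G0 MF bM Mmin.
have MG := M_in_G Gi Gc G0 MF bM.
pose S := [set s in F | btwb G s].
pose V := \bigcap_(s in S) s.
have SM : M \in S by rewrite inE MF; apply/btwP.
have VS : forall s, s \in S -> V \subset s by move=> s sS; exact: bigcap_inf.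
have VM := VS M SM.
have BV : forall B, minimal_in G B -> B \subset V.
  move=> B Bmin; apply/bigcapsP => s; rewrite inE => /andP[_ /btwP [h _]].
  exact: h.
have [Y0 Y0G] := G0; have [B0 [B0min _]] := exists_min Y0G.
have B0V := BV B0 B0min; case/andP: (B0min) => B0G _.
have Hcomp : forall Y, Y \in G -> (Y \subset V) || (V \subset Y).
  move=> Y YG.
  case: (boolP [exists s in S, s \subset Y]) => [/exists_inP [s sS sY]|].
    by apply/orP; right; exact: subset_trans (VS s sS) sY.
  move/exists_inPn => H; apply/orP; left; apply/bigcapsP => s sS.
  apply/negPn/negP => Ys.
  have FY : Y \in F by exact/innerF/Gi.
  move: (sS); rewrite inE => /andP[sF /btwP bs].
  have bY := inc_btw nN Gi sF bs YG (H s sS) Ys.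
  have YS : Y \in S by rewrite inE FY; apply/btwP.
  by have := H Y YS; rewrite subxx.
have inGp : forall x y, x \in V |: F -> x != V -> x != set0 -> x != setT ->
    y \in G -> (y \proper x) || (x \proper y) -> x \in G.
  move=> x y xF xV x0 xT yG yx; apply: (Gc y x yG) => //.
  by rewrite innerP (memU1 xF xV) x0 xT.
have VF : V \in F.
  apply/negPn/negP => VnF.
  have [a [b [c [d [aF bF cF dF HN]]]]] := sat _ VnF.
  have [[ac bc bd nab nba] [ncd ndc nad nda]] := isN_unpack HN.
  have neq1 : forall x y : {set 'I_n}, ~~ (x \subset y) -> x != y.
    by move=> x y; apply: contraNneq => ->; rewrite subxx.
  have neqP : forall x y : {set 'I_n}, x \proper y -> x != y.
    by move=> x y; apply: contraTneq => ->; rewrite properxx.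
  case: (eqVneq c V) => [cV|cV].
    subst c.
    have bV : b != V by exact: neqP.
    have bG : b \in G.
      apply: (inGp b M) => //; [exact: ne0 nba|exact: properNT bc|].
      by rewrite (proper_sub_trans bc VM) orbT.
    have dV : d != V by rewrite eq_sym; exact: neq1.
    have dG : d \in G.
      apply: (inGp d b) => //; [exact: properN0 bd|exact: neT ncd|].
      by rewrite bd.
    by have := Hcomp d dG; rewrite (negbTE ncd) (negbTE ndc).
  case: (eqVneq d V) => [dV|dV].
    subst d.
    have bV : b != V by exact: neqP.
    have bG : b \in G.
      apply: (inGp b M) => //; [exact: ne0 nba|exact: properNT bc|].
      by rewrite (proper_sub_trans bd VM) orbT.
    have cG : c \in G.
      apply: (inGp c b) => //; [exact: properN0 bc|exact: neT ndc|].
      by rewrite bc.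
    by have := Hcomp c cG; rewrite (negbTE ncd) (negbTE ndc).
  have cG : c \in G.
    apply: (inGp c B0) => //; [exact: properN0 bc|exact: neT ndc|].
    case: (eqVneq a V) => [aV|aV].
      by subst a; rewrite (sub_proper_trans B0V ac).
    case: (eqVneq b V) => [bV|bV].
      by subst b; rewrite (sub_proper_trans B0V bc).
    have aF' := memU1 aF aV; have bF' := memU1 bF bV.
    have cF' := memU1 cF cV; have dF' := memU1 dF dV.
    by exfalso; apply: nN; exists a, b, c, d.
  case: (eqVneq a V) => [aV|aV].
    subst a.
    have bV : b != V by rewrite eq_sym; exact: neq1.
    have bG : b \in G.
      apply: (inGp b c) => //; [exact: ne0 nba|exact: properNT bc|].
      by rewrite bc orbT.
    by have := Hcomp b bG; rewrite (negbTE nab) (negbTE nba).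
  case: (eqVneq b V) => [bV|bV].
    subst b.
    have aG : a \in G.
      apply: (inGp a c) => //; [exact: ne0 nab|exact: properNT ac|].
      by rewrite ac orbT.
    by have := Hcomp a aG; rewrite (negbTE nab) (negbTE nba).
  have aF' := memU1 aF aV; have bF' := memU1 bF bV.
  have cF' := memU1 cF cV; have dF' := memU1 dF dV.
  by apply: nN; exists a, b, c, d.
have bV : between G V.
  split; first exact: BV.
  by move=> A Amax; apply: subset_trans VM _; case: bM => _; apply.
have VeqM := Mmin V VF bV VM.
by move=> Y YG; rewrite -VeqM; exact: Hcomp.
Qed.

Lemma neq1 n (x y : {set 'I_n}) : ~~ (x \subset y) -> x != y.
Proof. by apply: contraNneq => ->; rewrite subxx. Qed.

Lemma neqP n (x y : {set 'I_n}) : x \proper y -> x != y.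
Proof. by apply: contraTneq => ->; rewrite properxx. Qed.

Lemma propN n (x y : {set 'I_n}) : x \proper y -> ~~ (y \subset x).
Proof. by rewrite properE => /andP[]. Qed.

Lemma part1 n (F G : {set {set 'I_n}}) M (i : 'I_n) :
  ~ has_N F ->
  (forall Y Z, Y \in G -> Z \in inner F -> (Y \proper Z) || (Z \proper Y) -> Z \in G) ->
  M \in G -> (forall Y, Y \in G -> (Y \subset M) || (M \subset Y)) ->
  M \in F -> i \notin M -> (M :|: [set i]) \notin F ->
  max_in_some_N ((M :|: [set i]) |: F) (M :|: [set i]) ->
  exists a b d,
    [/\ a \in (M :|: [set i]) |: F, b \in (M :|: [set i]) |: F,
        d \in (M :|: [set i]) |: F,
        is_N a b (M :|: [set i]) d & (a = M \/ b = M)].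
Proof.
move=> nN Gc MG Lc MF iM XnF.
set X := M :|: [set i].
have MXs : M \subset X by exact: subsetUl.
have iX : i \in X by rewrite !inE eqxx orbT.
have MX : M \proper X.
  rewrite properE MXs /=; apply/negP => /subsetP h; by move/negP: iM; apply; apply: h.
have sub_noi : forall Z : {set 'I_n}, Z \subset X -> i \notin Z -> Z \subset M.
  move=> Z ZX iZ; apply/subsetP => x xZ.
  have := (subsetP ZX) x xZ; rewrite !inE => /orP[//|/eqP xi].
  by move: iZ; rewrite -xi xZ.
have X_sub : forall Z : {set 'I_n}, M \subset Z -> i \in Z -> X \subset Z.
  by move=> Z MZ iZ; rewrite subUset MZ sub1set.
have iNM : forall Z : {set 'I_n}, i \in Z -> ~~ (Z \subset M).
  by move=> Z iZ; apply/negP => /subsetP h; move/negP: iM; apply; apply: h.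
have MF' : M \in X |: F by rewrite setU1r.
case/existsP => a /existsP [b /existsP [c /existsP [d /and5P [aF bF cF dF /andP [HN Hor]]]]].
case/orP: Hor => /eqP Xe.
- rewrite -Xe in HN cF.
  have [[aX bX bd nab nba] [nXd ndX nad nda]] := isN_unpack HN.
  have aF' := memU1 aF (neqP aX); have bF' := memU1 bF (neqP bX).
  have dF' := memU1 dF (neq1 ndX).
  case iB: (i \in b).
    exists M, b, d; split => //; last by left.
    have id : i \in d by move/proper_sub/subsetP: bd; apply.
    rewrite /is_N MX bX bd nXd ndX (iNM b iB) (iNM d id) /= ?andbT.
    apply/andP; split.
    + by apply/negP => h; move/negP: (propN bX); apply; exact: X_sub.
    + by apply/negP => h; move/negP: nXd; apply; exact: X_sub.
  have bM := sub_noi b (proper_sub bX) (negbT iB).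
  case: (eqVneq b M) => [bM'|bnM].
    by exists a, b, d; split => //; right.
  have bpM : b \proper M by rewrite properEneq bnM bM.
  case iA: (i \in a).
    case MD: (M \subset d).
      exists a, M, d; split => //; last by right.
      rewrite /is_N aX MX properE MD nXd ndX nad nda (iNM a iA) /= ?andbT.
      apply/andP; split.
      + by apply/negP => h; move/negP: ndX; apply; exact: subset_trans h MXs.
      + by apply/negP => h; move/negP: (propN aX); apply; exact: X_sub.
    exfalso.
    have bG : b \in G.
      apply: (Gc M b MG); last by rewrite bpM orbT.
      by rewrite innerP bF' (ne0 nba) (properNT bX).
    have dG : d \in G.
      apply: (Gc b d bG); last by rewrite bd.
      by rewrite innerP dF' (ne0 ndX) (neT nXd).
    case/orP: (Lc d dG) => [h|h]; last by rewrite h in MD.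
    by move/negP: ndX; apply; exact: subset_trans h MXs.
  have aM := sub_noi a (proper_sub aX) (negbT iA).
  case: (eqVneq a M) => [aM'|anM].
    by exists a, b, d; split => //; left.
  exfalso; apply: nN; exists a, b, M, d; split => //.
  rewrite /is_N (properEneq a) anM aM bpM bd nab nba nad nda /= ?andbT.
  apply/andP; split.
  + by apply/negP => h; move/negP: nad; apply; exact: subset_trans aM h.
  + by apply/negP => h; move/negP: ndX; apply; exact: subset_trans h MXs.
- rewrite -Xe in HN dF.
  have [[ac bc bX nab nba] [ncX nXc nad nda]] := isN_unpack HN.
  have aF' := memU1 aF (neq1 nad); have bF' := memU1 bF (neqP bX).
  have cF' := memU1 cF (neq1 ncX).
  case iB: (i \in b).
    exists M, b, c; split => //; last by left.
    have ic : i \in c by move/proper_sub/subsetP: bc; apply.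
    rewrite /is_N MX bX bc nXc ncX (iNM b iB) (iNM c ic) /= ?andbT.
    apply/andP; split.
    + by apply/negP => h; move/negP: (propN bX); apply; exact: X_sub.
    + by apply/negP => h; move/negP: nXc; apply; exact: X_sub.
  exfalso.
  have bM := sub_noi b (proper_sub bX) (negbT iB).
  have bG : b \in G.
    case: (eqVneq b M) => [->//|bnM].
    apply: (Gc M b MG); last by rewrite [b \proper M]properEneq bnM bM orbT.
    by rewrite innerP bF' (ne0 nba) (properNT bX).
  have cG : c \in G.
    apply: (Gc b c bG); last by rewrite bc.
    by rewrite innerP cF' (properN0 bc) (neT nXc).
  have aG : a \in G.
    apply: (Gc c a cG); last by rewrite ac orbT.
    by rewrite innerP aF' (ne0 nab) (properNT ac).
  case/orP: (Lc a aG) => h.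
    by move/negP: nad; apply; exact: subset_trans h MXs.
  by move/negP: nba; apply; exact: subset_trans bM h.
Qed.

Theorem lemma3p3 (n : nat) (F G : {set {set 'I_n}}) (M : {set 'I_n}) :
  0 < n ->
  N_saturated F ->
  component F G ->
  M \in F ->
  between G M ->
  (forall M', M' \in F -> between G M' -> M' \subset M -> M' = M) ->
  (forall i : 'I_n, i \notin M -> (M :|: [set i]) \notin F ->
     max_in_some_N ((M :|: [set i]) |: F) (M :|: [set i]) ->
     exists a b d,
       [/\ a \in (M :|: [set i]) |: F, b \in (M :|: [set i]) |: F,
           d \in (M :|: [set i]) |: F,
           is_N a b (M :|: [set i]) d & (a = M \/ b = M)])
  /\
  (#|[set i : 'I_n | [&& i \notin M, (M :|: [set i]) \notin F &
        max_in_some_N ((M :|: [set i]) |: F) (M :|: [set i]) ]]| + 2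
     <= #|F|).
Proof.
move=> n0 sat comp MF bM Mmin.
have [nN _] := sat.
have [Gi Gc G0] := compP comp.
have MG := M_in_G Gi Gc G0 MF bM.
have Lc := Lcomp sat Gi Gc G0 MF bM Mmin.
have P1 := fun i => @part1 n F G M i nN Gc MG Lc MF.
split; first exact: P1.
pose i0 : 'I_n := Ordinal n0.
pose h (e : {set 'I_n}) := odflt i0 [pick j in e :\: M].
pose S' := F :\: [set set0; M].
have M0 : M != set0 by have := Gi M MG; rewrite innerP => /and3P[].
have F0 := set0_in sat.
have cardS : #|S'| + 2 = #|F|.
  rewrite -(cardsID [set set0; M] F) addnC; congr (_ + _).
  have -> : F :&: [set set0; M] = [set set0; M].
    apply/setIidPr/subsetP => x; rewrite !inE => /orP[/eqP->|/eqP->] //.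
  by rewrite cards2 eq_sym M0.
rewrite -cardS leq_add2r.
apply: leq_trans (leq_imset_card h S').
apply: subset_leq_card; apply/subsetP => i; rewrite inE => /and3P[iM XnF Hmax].
have [a [b [d [aQ bQ dQ HN ab]]]] := P1 i iM XnF Hmax.
have [[aX bX _ nab nba] _] := isN_unpack HN.
have [e [eQ eX eMn]] : exists e, [/\ e \in (M :|: [set i]) |: F,
    e \proper M :|: [set i] & ~~ (e \subset M)].
  case: ab => [aM|bM'].
    by exists b; split => //; rewrite -aM.
  by exists a; split => //; rewrite -bM'.
have eF := memU1 eQ (neqP eX).
have ie : i \in e.
  apply/negPn/negP => ie; move/negP: eMn; apply.
  apply/subsetP => x xe.
  have := subsetP (proper_sub eX) x xe; rewrite !inE => /orP[//|/eqP xi].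
  by move: ie; rewrite -xi xe.
have eD : e :\: M = [set i].
  apply/setP => x; rewrite !inE; apply/andP/eqP => [[xM xe]|->]; last by [].
  have := subsetP (proper_sub eX) x xe; rewrite !inE => /orP[xM'|/eqP //].
  by rewrite xM' in xM.
have he : h e = i.
  rewrite /h eD; case: pickP => [j|H]; first by rewrite inE => /eqP.
  by have := H i; rewrite inE eqxx.
apply/imsetP; exists e => //.
rewrite !inE eF andbT negb_or; apply/andP; split.
- by apply: contraTneq ie => ->; rewrite inE.
- by apply: contraTneq ie => ->.
Qed.
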